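(* Let $g:\mathbb{R}^m\to\mathbb{R}$ be separable convex, i.e. $g(v) = \sum_{i=1}^m g_i(v_i)$ with each $g_i:\mathbb{R}\to\mathbb{R}$ convex, and let $W\in\mathbb{Z}^{m\times n}$. Then $f(x) = g(Wx)$ admits a $\delta$-proximity with $\delta \le 2m(2m\|W\|_\infty + 1)^m$; that is, for every minimizer $x^\star$ of $f$ over $[0,1]^n$ with at most $m$ fractional entries there exists a minimizer $z^\star$ of $f$ over $\{0,1\}^n$ with $\|x^\star - z^\star\|_1 \le 2m(2m\|W\|_\infty + 1)^m$.
   Context: $\|W\|_\infty$ denotes the maximum absolute value of an entry of $W$. A fractional entry of $x\in[0,1]^n$ is an entry not in $\{0,1\}$. *)

(* Defs.v *)
From mathcomp Require Import all_boot all_order all_algebra.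
From mathcomp Require Import reals.
Set Implicit Arguments. Unset Strict Implicit. Unset Printing Implicit Defensive.
Import Order.TTheory GRing.Theory Num.Theory.
Local Open Scope ring_scope.

Definition convex_fun (R : realFieldType) (h : R -> R) : Prop :=
  forall (a b t : R), 0 <= t -> t <= 1 ->
    h (t * a + (1 - t) * b) <= t * h a + (1 - t) * h b.

Definition matvec (R : realFieldType) (m n : nat) (W : 'M[int]_(m, n))
  (x : 'I_n -> R) (i : 'I_m) : R :=
  \sum_(j < n) (W i j)%:~R * x j.

Definition sepf (R : realFieldType) (m n : nat) (g : 'I_m -> R -> R)
  (W : 'M[int]_(m, n)) (x : 'I_n -> R) : R :=
  \sum_(i < m) g i (matvec W x i).

Definition maxabs (m n : nat) (W : 'M[int]_(m, n)) : nat :=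
  \max_(i < m) \max_(j < n) `|W i j|%N.

Definition in_box (R : realFieldType) (n : nat) (x : 'I_n -> R) : Prop :=
  forall j, 0 <= x j <= 1.

Definition is_binary (R : realFieldType) (n : nat) (x : 'I_n -> R) : Prop :=
  forall j, x j = 0 \/ x j = 1.

Definition nfrac (R : realFieldType) (n : nat) (x : 'I_n -> R) : nat :=
  #|[set j | (x j != 0) && (x j != 1)]|.

Definition l1dist (R : realFieldType) (n : nat) (x y : 'I_n -> R) : R :=
  \sum_(j < n) `|x j - y j|.

(* Main.v *)
Require Import Defs.
From mathcomp Require Import all_boot all_order all_algebra.
From mathcomp Require Import reals.
From mathcomp Require Import zify ring lra.
Set Implicit Arguments. Unset Strict Implicit. Unset Printing Implicit Defensive.
Import Order.TTheory GRing.Theory Num.Theory.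
Local Open Scope ring_scope.

Section Steinitz.
Variables (R : realFieldType) (T : finType) (m : nat) (v : T -> 'I_m -> R).

Lemma kernel_exists (J : {set T}) : (m.+1 < #|J|)%N ->
  exists gam : T -> R, [/\ (forall t, t \notin J -> gam t = 0),
    (exists t, gam t != 0), \sum_t gam t = 0 &
    forall i, \sum_t gam t * v t i = 0].
Proof.
move=> hJ.
pose M : 'M[R]_(#|J|, m + 1) :=
  row_mx (\matrix_(a < #|J|, i < m) v (enum_val a) i) (const_mx 1).
have hk : kermx M != 0.
  rewrite -mxrank_eq0 mxrank_ker.
  have := rank_leq_col M => h.
  rewrite subn_eq0 -ltnNge; lia.
have [a [b hab]] : exists a b, kermx M a b != 0.
  case: (boolP [exists p : 'I_#|J| * 'I_#|J|, kermx M p.1 p.2 != 0]) => [hE|hE].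
    by move/existsP: hE => [[a b] /= h]; exists a, b.
  move/existsPn: hE => h; move/negP: hk; case; apply/eqP/matrixP => a b.
  by have := h (a, b); rewrite /= negbK => /eqP ->; rewrite mxE.
pose y := row a (kermx M).
have hy : y *m M = 0 by rewrite /y -row_mul mulmx_ker row0.
have hyl : y *m (\matrix_(a < #|J|, i < m) v (enum_val a) i) = 0.
  by move: hy; rewrite mul_mx_row -row_mx0 => /eq_row_mx [].
have hyr : y *m (const_mx 1 : 'M_(#|J|, 1)) = 0.
  by move: hy; rewrite mul_mx_row -row_mx0 => /eq_row_mx [].
pose gam t := \sum_(c < #|J|) (enum_val c == t)%:R * y 0 c.
have key : forall f : T -> R, \sum_t gam t * f t = \sum_(c < #|J|) y 0 c * f (enum_val c).
  move=> f; rewrite /gam.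
  under eq_bigr do rewrite mulr_suml.
  rewrite exchange_big /=; apply: eq_bigr => c _.
  rewrite (bigD1 (enum_val c)) //= eqxx mul1r big1 ?addr0 // => t /negbTE ht.
  by rewrite eq_sym ht mul0r mul0r.
exists gam; split.
- move=> t ht; rewrite /gam big1 // => c _.
  case: eqP => [e|]; last by rewrite mul0r.
  by move: ht; rewrite -e enum_valP.
- exists (enum_val b); rewrite /gam (bigD1 b) //= eqxx mul1r big1 ?addr0.
    by rewrite /y mxE.
  move=> c hc; case: eqP; last by rewrite mul0r.
  by move/enum_val_inj => e; rewrite e eqxx in hc.
- have := key (fun _ => 1).
  under eq_bigr do rewrite mulr1.
  move=> ->; have := congr1 (fun N : 'M[R]_(1,1) => N 0 0) hyr; rewrite !mxE => e.
  by rewrite -[RHS]e; apply: eq_bigr => c _; congr (_ * _); rewrite mxE.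
- move=> i; rewrite key; have := congr1 (fun N : 'M[R]_(1,m) => N 0 i) hyl; rewrite !mxE => e.
  by rewrite -[RHS]e; apply: eq_bigr => c _; congr (_ * _); rewrite mxE.
Qed.

Definition feas (S : {set T}) (c : R) (mu : T -> R) :=
  [/\ (forall t, t \in S -> 0 <= mu t <= 1), \sum_(t in S) mu t = c &
      forall i, \sum_(t in S) mu t * v t i = 0].
Definition fracs (S : {set T}) (mu : T -> R) :=
  [set t in S | (0 < mu t) && (mu t < 1)].

Lemma frac_reduce S c mu : feas S c mu -> (m.+1 < #|fracs S mu|)%N ->
  exists mu', feas S c mu' /\ (#|fracs S mu'| < #|fracs S mu|)%N.
Proof.
move=> [hb hs hv] hJ.
have [gam [g0 [t1 ht1] gs gv]] := kernel_exists hJ.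
have gJ : forall t, gam t != 0 -> t \in fracs S mu.
  by move=> t h; apply/negPn/negP => hn; rewrite g0 ?eqxx in h.
have gmu : forall t, gam t != 0 -> [/\ t \in S, 0 < mu t & mu t < 1].
  by move=> t /gJ; rewrite inE => /andP [-> /andP [-> ->]].
have gsum : forall f : T -> R, \sum_(t in S) gam t * f t = \sum_t gam t * f t.
  move=> f; rewrite [RHS](bigID (mem S)) /= [X in _ + X]big1 ?addr0 //.
  move=> t ht; case: (eqVneq (gam t) 0) => [->|h]; first by rewrite mul0r.
  by have [] := gmu t h; rewrite (negbTE ht).
pose rho t := if 0 < gam t then (1 - mu t) / gam t else - mu t / gam t.
have rpos : forall t, gam t != 0 -> 0 < rho t.
  move=> t h; have [_ h1 h2] := gmu t h; rewrite /rho; case: ifP => hg.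
    by apply: divr_gt0 => //; rewrite subr_gt0.
  have hg' : gam t < 0 by rewrite lt_neqAle h /= leNgt hg.
  have -> : - mu t / gam t = mu t / (- gam t) by rewrite invrN mulrN mulNr.
  by apply: divr_gt0 => //; rewrite oppr_gt0.
have rg : forall t, gam t != 0 -> rho t * gam t = if 0 < gam t then 1 - mu t else - mu t.
  by move=> t h; rewrite /rho; case: ifP => _; rewrite divfK.
pose t0 := [arg min_(t < t1 | gam t != 0) rho t]%O.
have [t0P t0min] : gam t0 != 0 /\ forall t, gam t != 0 -> rho t0 <= rho t.
  by rewrite /t0; case: arg_minP => // t ht hmin; split => // u /hmin.
pose s := rho t0.
have s0 : 0 < s by exact: rpos.
pose mu' t := mu t + s * gam t.
exists mu'; split; first split.
- move=> t ht; rewrite /mu'; case: (eqVneq (gam t) 0) => [->|h].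
    by rewrite mulr0 addr0 hb.
  have hst := t0min t h; have := rg t h; have [_ h1 h2] := gmu t h.
  case: ifP => hg e.
    have : s * gam t <= rho t * gam t by rewrite ler_pM2r.
    rewrite e => h3; have : 0 < s * gam t by apply: mulr_gt0.
    move=> h4; apply/andP; split; lra.
  have hg' : gam t < 0 by rewrite lt_neqAle h /= leNgt hg.
  have : rho t * gam t <= s * gam t by rewrite ler_nM2r.
  rewrite e => h3; have : s * gam t < 0 by rewrite pmulr_rlt0.
  move=> h4; apply/andP; split; lra.
- rewrite /mu' big_split /= hs -mulr_sumr.
  have := gsum (fun _ => 1); under eq_bigr do rewrite mulr1.
  under [in X in _ = X -> _]eq_bigr do rewrite mulr1.
  by move=> ->; rewrite gs mulr0 addr0.
- move=> i; rewrite /mu'; under eq_bigr do rewrite mulrDl.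
  rewrite big_split /= hv add0r.
  under eq_bigr do rewrite -mulrA.
  by rewrite -mulr_sumr gsum gv mulr0.
have sub : fracs S mu' \subset fracs S mu :\ t0.
  apply/subsetP => t; rewrite !inE => /andP [htS /andP [h1 h2]].
  apply/andP; split.
    apply/eqP => e; move: h1 h2; rewrite e /mu' /s rg //.
    case: ifP => _ h1 h2; lra.
  case: (eqVneq (gam t) 0) => [e|h]; last by have := gJ t h; rewrite inE.
  by move: h1 h2; rewrite /mu' e mulr0 addr0 => h1 h2; rewrite htS h1 h2.
rewrite (cardsD1 t0 (fracs S mu)) gJ //= add1n ltnS.
exact: subset_leq_card.
Qed.

Lemma vertex S c mu : feas S c mu ->
  exists mu', feas S c mu' /\ (#|fracs S mu'| <= m.+1)%N.
Proof.
have [N] := ubnP #|fracs S mu|; elim: N mu => // N IH mu hN hf.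
case: (leqP #|fracs S mu| m.+1) => h; first by exists mu.
have [mu' [hf' hlt]] := frac_reduce hf h.
apply: (IH mu') => //; exact: leq_trans hlt hN.
Qed.


Definition Good (S : {set T}) :=
  (m <= #|S|)%N /\ exists lam, feas S (#|S| - m)%:R lam.

Lemma good_step (S : {set T}) : (m < #|S|)%N -> Good S -> exists t, t \in S /\ Good (S :\ t).
Proof.
move=> hmS [_ [lam [hb hs hv]]].
have [k' hk] : exists k', #|S| = (m + k'.+1)%N by exists (#|S| - m).-1; lia.
rewrite hk addKn in hs.
pose a : R := k'%:R / k'.+1%:R.
have hk0 : (0 : R) < k'.+1%:R by rewrite ltr0n.
have a0 : 0 <= a by apply: divr_ge0.
have a1 : a <= 1 by rewrite ler_pdivrMr // mul1r ler_nat.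
pose mu0 t := lam t * a.
have f0 : feas S k'%:R mu0.
  split.
  - move=> t /hb /andP [h0 h1]; apply/andP; split; first exact: mulr_ge0.
    exact: mulr_ile1.
  - rewrite -mulr_suml hs mulrC -mulrA mulVf ?mulr1 //; exact: lt0r_neq0.
  - move=> i; under eq_bigr do rewrite mulrAC.
    by rewrite -mulr_suml hv mul0r.
have [mu' [[hb' hs' hv'] hfr]] := vertex f0.
have [t [htS ht0]] : exists t, t \in S /\ mu' t = 0.
  case: (boolP [exists t in S, mu' t == 0]).
    by move/existsP => [t /andP [h /eqP e]]; exists t.
  move/existsPn => hn; exfalso.
  have pos : forall t, t \in S -> 0 < mu' t.
    move=> t ht; have := hn t; rewrite ht /= => h.
    by have := hb' t ht; case/andP => h0 _; rewrite lt_neqAle eq_sym h h0.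
  set Fr := fracs S mu' in hfr.
  have FrS : Fr \subset S by apply/subsetP => t; rewrite inE => /andP [].
  move: hs'; rewrite (big_setID Fr) /= (setIidPr FrS).
  have -> : \sum_(i in S :\: Fr) mu' i = #|S :\: Fr|%:R.
    rewrite -sumr_const; apply: eq_bigr => t; rewrite !inE => /andP [hnf htS].
    have := hb' t htS; have := pos t htS; move: hnf.
    rewrite htS /= negb_and => /orP [] h1 h2 /andP [h3 h4].
      by rewrite h2 in h1.
    by apply/eqP; rewrite eq_le h4 leNgt h1.
  rewrite cardsD (setIidPr FrS) hk.
  case: (set_0Vmem Fr) => [e|[t1 ht1]].
    rewrite e big_set0 cards0 subn0 add0r => /eqP; rewrite eqr_nat; lia.
  have : 0 < \sum_(i in Fr) mu' i.
    rewrite (big_setD1 t1) //=; apply: ltr_pwDl.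
      by apply: pos; move/subsetP: FrS; apply.
    by apply: sumr_ge0 => i; rewrite !inE => /andP [_ /andP [_ /andP [h _]]]; apply: ltW.
  have : ((m + k'.+1 - #|Fr|)%N%:R : R) >= k'%:R by rewrite ler_nat; lia.
  move=> h1 h2 h3; have : (0:R) < 0 by lra.
  by rewrite ltxx.
exists t; split => //; split.
  by move: hk; rewrite (cardsD1 t) htS; lia.
exists mu'; split.
- by move=> x; rewrite in_setD1 => /andP [_]; apply: hb'.
- have -> : (#|S :\ t| - m)%N = k' by move: hk; rewrite (cardsD1 t) htS; lia.
  by move: hs'; rewrite (big_setD1 t) //= ht0 add0r.
- by move=> i; move: (hv' i); rewrite (big_setD1 t) //= ht0 mul0r add0r.
Qed.

Lemma good_bound (S : {set T}) (D : R) : Good S -> (forall t i, t \in S -> `|v t i| <= D) ->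
  forall i, `|\sum_(t in S) v t i| <= m%:R * D.
Proof.
move=> [hm [lam [hb hs hv]]] hD i.
have -> : \sum_(t in S) v t i = \sum_(t in S) (1 - lam t) * v t i.
  by under [RHS]eq_bigr do rewrite mulrBl mul1r; rewrite sumrB hv subr0.
apply: le_trans (ler_norm_sum _ _ _) _.
apply: (@le_trans _ _ (\sum_(t in S) (1 - lam t) * D)).
  apply: ler_sum => t ht; rewrite normrM ger0_norm; last first.
    by have := hb t ht; case/andP => _ h; rewrite subr_ge0.
  apply: ler_wpM2l; last exact: hD.
  by have := hb t ht; case/andP => _ h; rewrite subr_ge0.
rewrite -mulr_suml sumrB hs sumr_const natrB //.
by rewrite opprB addrC subrK.
Qed.

Lemma seq_bound (D : R) (r : seq T) i : 0 <= D -> (forall t, t \in r -> `|v t i| <= D) ->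
  `|\sum_(t <- r) v t i| <= (size r)%:R * D.
Proof.
move=> D0; elim: r => [|x r IH] h; first by rewrite big_nil normr0 mul0r.
rewrite big_cons /= -addn1 natrD mulrDl mul1r.
apply: le_trans (ler_normD _ _) _; rewrite [X in _ <= X]addrC; apply: lerD.
  by apply: h; rewrite in_cons eqxx.
by apply: IH => t ht; apply: h; rewrite in_cons ht orbT.
Qed.

Lemma steinitz_seq (D : R) : 0 <= D -> forall S : {set T},
  (#|S| <= m)%N \/ Good S -> (forall t i, t \in S -> `|v t i| <= D) ->
  exists s : seq T, [/\ uniq s, s =i S &
    forall k i, `|\sum_(t <- take k s) v t i| <= m%:R * D].
Proof.
move=> D0 S; have [N] := ubnP #|S|; elim: N S => // N IH S hN hS hD.
case: (leqP #|S| m) => hsm.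
  exists (enum S); split; first exact: enum_uniq.
    by move=> x; rewrite mem_enum.
  move=> k i; apply: le_trans (seq_bound D0 _) _.
    by move=> t /mem_take; rewrite mem_enum => h; apply: hD.
  apply: ler_wpM2r => //; rewrite ler_nat size_take_min -cardE.
  exact: leq_trans (geq_minr _ _) hsm.
have hG : Good S by case: hS => // h; rewrite leqNgt hsm in h.
have [t [htS hG']] := good_step hsm hG.
have hcard : #|S| = #|S :\ t|.+1 by rewrite (cardsD1 t) htS.
have [s' [hu hmem hb]] : exists s' : seq T, [/\ uniq s', s' =i S :\ t &
    forall k i, `|\sum_(t <- take k s') v t i| <= m%:R * D].
  apply: IH; first by rewrite -ltnS -hcard.
    by right.
  by move=> x i; rewrite in_setD1 => /andP [_]; apply: hD.
have tn : t \notin s' by rewrite hmem setD11.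
exists (rcons s' t); split.
- by rewrite rcons_uniq tn hu.
- move=> x; rewrite mem_rcons in_cons hmem in_setD1.
  by case: (eqVneq x t) => [->|]; rewrite ?htS.
move=> k i; case: (leqP k (size s')) => hk.
  by rewrite -cats1 takel_cat.
rewrite take_oversize ?size_rcons //.
rewrite big_uniq /=; last by rewrite rcons_uniq tn hu.
have -> : \sum_(i0 in rcons s' t) v i0 i = \sum_(i0 in S) v i0 i.
  apply: eq_bigl => x; rewrite mem_rcons in_cons hmem in_setD1.
  by case: (eqVneq x t) => [->|]; rewrite ?htS.
exact: good_bound.
Qed.

End Steinitz.

Lemma count_le (T : finType) (Q : {set T}) (r : seq T) :
  uniq r -> (count (mem Q) r <= #|Q|)%N.
Proof.
move=> hu; rewrite -size_filter cardE; apply: uniq_leq_size.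
  exact: filter_uniq.
by move=> x; rewrite mem_filter mem_enum => /andP [].
Qed.

Lemma core (T : finType) (m D : nat) (v : T -> 'I_m -> int) (A Q : {set T}) :
  (forall t i, t \in A -> (`|v t i| <= D)%N) ->
  (forall i, \sum_(t in A) v t i = 0) ->
  (#|Q|.+1 * (2 * m * D + 1) ^ m < #|A|.+1)%N ->
  exists B : {set T}, [/\ B \subset A, [disjoint B & Q], B != set0 &
    forall i, \sum_(t in B) v t i = 0].
Proof.
move=> hD hsum hcard.
pose vr t i : rat := (v t i)%:~R.
have hDr : forall t i, t \in A -> `|vr t i| <= D%:R.
  move=> t i ht; rewrite /vr -intr_norm (_ : D%:R = (D%:Z)%:~R) // ler_int -abszE lez_nat; exact: hD.
have hgood : (#|A| <= m)%N \/ Good vr A.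
  case: (leqP #|A| m) => h; [by left | right].
  split; first exact: ltnW.
  exists (fun _ => (#|A| - m)%:R / #|A|%:R); split.
  - move=> t _; apply/andP; split; first by apply: divr_ge0.
    rewrite ler_pdivrMr ?mul1r ?ler_nat ?leq_subr // ltr0n; lia.
  - rewrite sumr_const -[_ *+ #|A|]mulr_natr divfK //.
    rewrite pnatr_eq0; lia.
  - move=> i; rewrite -mulr_sumr.
    have -> : \sum_(t in A) vr t i = 0 by rewrite /vr -rmorph_sum /= hsum.
    by rewrite mulr0.
have [s [hu hmem hb]] := steinitz_seq (ler0n _ D) hgood hDr.
have hsize : size s = #|A|.
  by move/card_uniqP: hu => <-; apply: eq_card.
pose P (k : nat) i : int := \sum_(t <- take k s) v t i.
have hP : forall k i, `|P k i| <= (m * D)%:Z.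
  move=> k i; rewrite -(ler_int rat) intr_norm /P rmorph_sum /=.
  by move: (hb k i); rewrite -natrM.
pose phi (k : 'I_#|A|.+1) : 'I_#|Q|.+1 * {ffun 'I_m -> 'I_(2 * m * D).+1} :=
  (inord (count (mem Q) (take k s)),
   [ffun i => inord (absz (P k i + (m * D)%:Z))]).
have : ~~ injectiveb phi.
  apply/negP => /injectiveP /leq_card; rewrite card_prod card_ffun !card_ord.
  by rewrite addn1 in hcard; rewrite leqNgt hcard.
move/injectivePn => [k [l hne e]].
wlog hkl : k l hne e / (k < l)%N.
  move=> H; case: (ltngtP k l) => h; first exact: H h.
    by apply: (H l k) => //; rewrite eq_sym.
  by move/val_inj: h => h; rewrite h eqxx in hne.
have hPb : forall (j : nat) i, 0 <= P j i + (m * D)%:Z /\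
    (absz (P j i + (m * D)%:Z)%R < (2 * m * D).+1)%N.
  move=> j i; have := hP j i; rewrite ler_norml => /andP [h1 h2]; lia.
move: e => [ec ef].
have hc : count (mem Q) (take k s) = count (mem Q) (take l s).
  move: ec => /(congr1 val); rewrite /= !inordK // ltnS; apply: count_le;
  exact: take_uniq.
have hPe : forall i, P k i = P l i.
  move=> i; have := congr1 (fun f : {ffun 'I_m -> 'I_(2 * m * D).+1} => val (f i)) ef; rewrite /= !ffunE /= !inordK;
  try by case: (hPb k i); case: (hPb l i).
  by case: (hPb k i); case: (hPb l i) => h1 _ h2 _; lia.
pose Mid := drop k (take l s).
have htl : take l s = take k s ++ Mid.
  by rewrite /Mid -[in LHS](cat_take_drop k (take l s)) -take_min (minn_idPl (ltnW hkl)).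
have hcM : count (mem Q) Mid = 0%N by move: hc; rewrite htl count_cat; lia.
have hsM : forall i, \sum_(t <- Mid) v t i = 0.
  move=> i; move: (hPe i); rewrite /P htl big_cat /= => e.
  by apply: (@addrI _ (\sum_(t <- take k s) v t i)); rewrite addr0 -e.
have huM : uniq Mid by rewrite /Mid drop_uniq // take_uniq.
exists [set x in Mid]; split.
- apply/subsetP => x; rewrite inE /Mid => /mem_drop /mem_take; rewrite hmem.
  by [].
- rewrite disjoints_subset; apply/subsetP => x; rewrite !inE => hx.
  apply/negP => hq; have : has (mem Q) Mid by apply/hasP; exists x.
  by rewrite has_count hcM.
- apply/set0Pn.
  have : (0 < size Mid)%N.
    rewrite /Mid size_drop size_takel; first by rewrite subn_gt0.
    by rewrite hsize -ltnS ltn_ord.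
  by case hM: Mid => [|x r] //= _; exists x; rewrite inE ?hM in_cons eqxx.
- move=> i; rewrite -[RHS](hsM i) big_uniq //; apply: eq_bigl => x.
  by rewrite inE.
Qed.



Lemma conv_pair (R : realFieldType) (g : R -> R) a u c : convex_fun g ->
  (0 <= c <= u) \/ (u <= c <= 0) ->
  g (a + c) + g (a + u - c) <= g a + g (a + u).
Proof.
move=> hg hc.
case: (eqVneq u 0) => [u0|un0].
  have c0 : c = 0 by rewrite u0 in hc; case: hc => /andP [h1 h2]; apply/eqP; rewrite eq_le h1 h2 ?orbT.
  by rewrite u0 c0 !addr0 subr0.
pose t := c / u.
have tu : t * u = c by rewrite /t divfK.
have t01 : 0 <= t <= 1.
  case: hc => /andP [h1 h2].
    have u0 : 0 < u by rewrite lt_neqAle eq_sym un0 (le_trans h1 h2).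
    by rewrite /t divr_ge0 ?ler_pdivrMr ?mul1r // ltW.
  have u0 : u < 0 by rewrite lt_neqAle un0 (le_trans h1 h2).
  have -> : t = (- c) / (- u) by rewrite /t invrN mulrNN.
  by rewrite divr_ge0 ?ler_pdivrMr ?mul1r ?oppr_gt0 ?lerN2 ?oppr_ge0 // ltW.
case/andP: t01 => t0 t1.
have e1 : a + c = t * (a + u) + (1 - t) * a by rewrite -tu; ring.
have e2 : a + u - c = (1 - t) * (a + u) + (1 - (1 - t)) * a by rewrite -tu; ring.
have h1 := hg (a + u) a t t0 t1.
have t0' : 0 <= 1 - t by rewrite subr_ge0.
have t1' : 1 - t <= 1 by lra.
have h2 := hg (a + u) a (1 - t) t0' t1'.
rewrite e1 e2; lra.
Qed.

Lemma sepf_ext (R : realFieldType) m n (g : 'I_m -> R -> R) W (x y : 'I_n -> R) :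
  (forall j, x j = y j) -> sepf g W x = sepf g W y.
Proof.
move=> h; apply: eq_bigr => i _; congr (g i _); apply: eq_bigr => j _; by rewrite h.
Qed.

Lemma l1_ext (R : realFieldType) n (x y y' : 'I_n -> R) :
  (forall j, y j = y' j) -> l1dist x y = l1dist x y'.
Proof. by move=> h; apply: eq_bigr => j _; rewrite h. Qed.

Lemma sum_minn (D a k : nat) : (\sum_(l < k) minn D (a - l * D) = minn (k * D) a)%N.
Proof.
elim: k => [|k IH]; first by rewrite big_ord0; lia.
rewrite big_ord_recr /= IH; lia.
Qed.

Lemma card_ltord (L a : nat) : (a <= L)%N -> #|[set k : 'I_L | (k < a)%N]| = a.
Proof.
move=> h; rewrite -sum1_card.
have -> : (\sum_(k in [set k : 'I_L | (k < a)%N]) 1 = \sum_(k < L | true && (k < a)) 1)%N.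
  by apply: eq_bigl => k; rewrite inE.
by rewrite -(big_ord_widen_cond L (fun _ => true) (fun _ => 1%N) h) sum1_card card_ord.
Qed.

Lemma exists_closest (R : realType) m n (g : 'I_m -> R -> R) W (xs : 'I_n -> R) :
  exists zs : 'I_n -> R, [/\ is_binary zs,
    (forall y, is_binary y -> sepf g W zs <= sepf g W y) &
    (forall y, is_binary y -> sepf g W y <= sepf g W zs -> l1dist xs zs <= l1dist xs y)].
Proof.
pose bv (b : {ffun 'I_n -> bool}) : 'I_n -> R := fun j => (b j)%:R.
have hbv : forall y, is_binary y -> exists b, forall j, y j = bv b j.
  move=> y hy; exists [ffun j => y j == 1] => j; rewrite /bv ffunE.
  by case: (hy j) => ->; rewrite ?eqxx // eq_sym oner_eq0.
pose b0 : {ffun 'I_n -> bool} := [ffun _ => false].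
pose b1 := [arg min_(b < b0) sepf g W (bv b)]%O.
have hb1 : forall b, sepf g W (bv b1) <= sepf g W (bv b).
  by rewrite /b1; case: arg_minP => // b _ h c; apply: h.
pose b2 := [arg min_(b < b1 | sepf g W (bv b) <= sepf g W (bv b1)) l1dist xs (bv b)]%O.
have [hb2a hb2b] : sepf g W (bv b2) <= sepf g W (bv b1) /\
    forall b, sepf g W (bv b) <= sepf g W (bv b1) -> l1dist xs (bv b2) <= l1dist xs (bv b).
  by rewrite /b2; case: arg_minP => //= b h1 h2; split => // c hc; exact: h2.
exists (bv b2); split.
- by move=> j; rewrite /bv; case: (b2 j); [right|left].
- by move=> y /hbv [b hb]; rewrite (sepf_ext _ _ hb); exact: le_trans hb2a (hb1 b).
- move=> y /hbv [b hb]; rewrite (sepf_ext _ _ hb) (l1_ext _ hb) => h.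
  by apply: hb2b; exact: le_trans h hb2a.
Qed.

Lemma sum_ind (R : realFieldType) (T : finType) (A : {set T}) :
  \sum_t ((t \in A)%:R : R) = #|A|%:R.
Proof.
rewrite (bigID (mem A)) /= [X in _ + X]big1 ?addr0; last by move=> t /negbTE ->.
by rewrite (eq_bigr (fun _ => 1)) ?sumr_const // => t ->.
Qed.

Theorem mainTheorem6 (R : realType) (m n : nat)
  (g : 'I_m -> R -> R) (W : 'M[int]_(m, n))
  (hg : forall i, convex_fun (g i))
  (xs : 'I_n -> R)
  (hxbox : in_box xs)
  (hxmin : forall y : 'I_n -> R, in_box y -> sepf g W xs <= sepf g W y)
  (hxfrac : (nfrac xs <= m)%N) :
  exists zs : 'I_n -> R,
    [/\ is_binary zs,
        (forall y : 'I_n -> R, is_binary y -> sepf g W zs <= sepf g W y) &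
        l1dist xs zs <= ((2 * m * (2 * m * maxabs W + 1) ^ m)%N)%:R].
Proof.
have [zs [zbin zmin zclose]] := exists_closest g W xs.
exists zs; split => //.
set D := maxabs W.
set X := ((2 * m * D + 1) ^ m)%N.
rewrite leNgt; apply/negP => hgt.
pose F := [set j | (xs j != 0) && (xs j != 1)].
have hF : (#|F| <= m)%N := hxfrac.
have xb : forall j, j \notin F -> xs j = 0 \/ xs j = 1.
  by move=> j; rewrite inE negb_and !negbK => /orP [] /eqP; auto.
pose sj j : int := if xs j == 0 then 1 else -1.
pose I := [set j | (j \notin F) && (zs j != xs j)].
have dI : forall j, j \in I -> zs j - xs j = (sj j)%:~R.
  move=> j; rewrite inE /sj => /andP [hj hne].
  case: (xb j hj) => e; case: (zbin j) => e'; rewrite e e' ?eqxx in hne *;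
    rewrite ?eqxx // ?oner_eq0 /=.
    by rewrite subr0.
  by rewrite sub0r.
have dnI : forall j, j \notin F -> j \notin I -> zs j = xs j.
  by move=> j hj; rewrite inE hj /= negbK => /eqP.
have sj1 : forall j, `|(sj j)%:~R : R| = 1.
  by move=> j; rewrite /sj; case: ifP => _; rewrite ?intrN ?normrN normr1.
have hl1 : l1dist xs zs <= m%:R + #|I|%:R.
  have h : forall j, `|xs j - zs j| <= (j \in F)%:R + (j \in I)%:R.
    move=> j; have := ler0n R (j \in I); have := ler0n R (j \in F).
    case: (boolP (j \in F)) => hjF /= h1 h2.
      have := hxbox j; case: (zbin j) => ->; rewrite ler_norml => /andP [h3 h4];
      apply/andP; split; lra.
    case: (boolP (j \in I)) => hjI.
      by rewrite distrC dI // sj1 add0r.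
    by rewrite dnI // subrr normr0 addr0.
  apply: le_trans (ler_sum _ (fun j _ => h j)) _.
  rewrite big_split /= !sum_ind lerD2r ler_nat; exact: hF.
have hI : (2 * m * X < m + #|I|)%N.
  by have := lt_le_trans hgt hl1; rewrite -natrD ltr_nat.
pose u i := matvec W zs i - matvec W xs i.
have hu : forall i, u i = \sum_j (W i j)%:~R * (zs j - xs j).
  by move=> i; rewrite /u /matvec -sumrB; apply: eq_bigr => j _; rewrite mulrBr.
pose ut i : int := if 0 <= u i then Num.floor (u i) else - Num.floor (- u i).
have hut : forall i, ((0 <= ((ut i)%:~R : R) <= u i) \/ (u i <= ((ut i)%:~R : R) <= 0)) /\
    `|u i - ((ut i)%:~R : R)| < 1.
  move=> i; rewrite /ut; case: ifP => h.
    have h1 := floor_itv (u i); rewrite intrD in h1.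
    have h2 : 0 <= (Num.floor (u i))%:~R :> R by rewrite ler0z floor_ge0.
    case/andP: h1 => h1 h3; split; first by left; apply/andP; split.
    rewrite ger0_norm; lra.
  have h0 : 0 <= - u i by rewrite oppr_ge0 ltW // ltNge h.
  have h1 := floor_itv (- u i); rewrite intrD in h1.
  have h2 : 0 <= (Num.floor (- u i))%:~R :> R by rewrite ler0z floor_ge0.
  case/andP: h1 => h1 h3; rewrite intrN; split.
    by right; apply/andP; split; lra.
  rewrite ler0_norm; lra.
pose tI i : int := \sum_(j in I) W i j * sj j.
pose r i := \sum_(j in F) (W i j)%:~R * (zs j - xs j).
have hur : forall i, u i = (tI i)%:~R + r i.
  move=> i; rewrite hu (bigID (mem F)) /= addrC; congr (_ + _).
  rewrite /tI rmorph_sum /= (bigID (mem I)) /= [X in _ + X]big1 ?addr0.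
    apply: eq_big => j.
      case: (boolP (j \in I)) => h; rewrite ?andbF ?andbT //.
      by move: h; rewrite inE => /andP [].
    by move/andP => [_ hj]; rewrite dI // intrM.
  by move=> j /andP [h1 h2]; rewrite dnI // subrr mulr0.
have hWD : forall i j, (`|W i j| <= D)%N.
  move=> i j; apply: (leq_trans (leq_bigmax (F := fun j0 => `|W i j0|%N) j)).
  exact: (leq_bigmax (F := fun i0 => \max_(j0 < n) `|W i0 j0|%N) i).
have hWDr : forall i j, `|(W i j)%:~R| <= D%:R :> R.
  move=> i j; rewrite -intr_norm -abszE.
  by rewrite -[X in X <= _]/((`|W i j|%N)%:R) ler_nat.
have hr : forall i, `|r i| <= (m * D)%:R.
  move=> i; apply: le_trans (ler_norm_sum _ _ _) _.
  apply: (@le_trans _ _ (\sum_(j in F) (D%:R : R))).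
    apply: ler_sum => j hj; rewrite normrM -[X in _ <= X]mulr1.
    apply: ler_pM; [exact: normr_ge0 | exact: normr_ge0 | exact: hWDr | ].
    have := hxbox j; case: (zbin j) => ->; rewrite ler_norml => /andP [h3 h4];
      apply/andP; split; lra.
  by rewrite sumr_const -mulrnA ler_nat mulnC leq_mul2r hF orbT.
have hq : forall i, (`|tI i - ut i| <= m * D)%N.
  move=> i; rewrite -ltnS -(ltr_nat R).
  rewrite -[X in X < _]/((`|tI i - ut i|%N%:Z)%:~R) abszE intr_norm intrB.
  have -> : (tI i)%:~R - (ut i)%:~R = (u i - (ut i)%:~R) - r i :> R.
    by rewrite hur; ring.
  apply: le_lt_trans (ler_normB _ _) _.
  have [_ h1] := hut i; have h2 := hr i.
  rewrite -addn1 natrD; lra.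
have hDpos : forall i, ut i != 0 -> (0 < D)%N.
  move=> i hu0; case: (posnP D) => // hD0; exfalso; move/negP: hu0; apply.
  have W0 : forall j, W i j = 0.
    by move=> j; apply/eqP; rewrite -absz_eq0 -leqn0 -hD0; exact: hWD.
  have e : u i = 0 by rewrite hu big1 // => j _; rewrite W0 mul0r.
  by rewrite /ut e lexx floor0.
pose q i := tI i - ut i.
pose piece (l : 'I_m) i : int := sgz (q i) * (minn D (`|q i|%N - l * D))%:Z.
have hpiece : forall i, \sum_(l < m) piece l i = q i.
  move=> i; rewrite /piece -mulr_sumr.
  under eq_bigr do rewrite -natz.
  rewrite -natr_sum sum_minn natz (minn_idPr (hq i)).
  by rewrite [RHS]intEsg.
have hpb : forall l i, (`|piece l i| <= D)%N.
  move=> l i; rewrite /piece abszM /=.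
  case: (sgzP (q i)) => _ /=; rewrite ?mul0n ?mul1n //; exact: geq_minl.
pose L := (\max_(i < m) `|ut i|%N).+1.
have hL : forall i, (`|ut i| < L)%N.
  by move=> i; rewrite ltnS; exact: (leq_bigmax (F := fun i => `|ut i|%N) i).
pose T := (('I_n + ('I_m * 'I_L)) + 'I_m)%type.
pose v (x : T) (i : 'I_m) : int := match x with
  | inl (inl j) => W i j * sj j
  | inl (inr p) => if p.1 == i then - sgz (ut i) else 0
  | inr l => - piece l i end.
pose A : {set T} := [set x : T | match x with
  | inl (inl j) => j \in I
  | inl (inr p) => (p.2 < `|ut p.1|)%N
  | inr _ => true end].
pose Q : {set T} := [set x : T | if x is inr _ then true else false].
have cQ : #|Q| = m.
  rewrite (_ : Q = inr @: [set: 'I_m]).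
    by rewrite card_imset ?cardsT ?card_ord // => a b [].
  apply/setP => x; case: x => [y|l]; rewrite [in LHS]inE.
    by apply/esym/imsetP => -[].
  by apply/esym/imsetP; exists l; rewrite ?inE.
have cA : (#|I| + m <= #|A|)%N.
  pose A1 : {set T} := [set inl (inl j) | j in I].
  have sub : A1 :|: Q \subset A.
    apply/subsetP => x; rewrite inE => /orP [/imsetP [j hj ->]|hx].
      by rewrite /A in_set.
    by move: hx; rewrite !inE; case: x.
  apply: leq_trans (subset_leq_card sub); rewrite cardsU.
  have -> : A1 :&: Q = set0.
    apply/setP => x; rewrite !inE; apply/negbTE/negP => /andP [/imsetP [j _ ->]].
    by [].
  by rewrite cards0 subn0 cQ card_imset // => a b [].
have hv : forall t i, t \in A -> (`|v t i| <= D)%N.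
  case=> [[j|[i' k]]|l] i; rewrite inE /= => h.
  - rewrite abszM /sj; case: ifP => _ /=; rewrite muln1; exact: hWD.
  - case: eqP => [e|_]; last by [].
    rewrite abszN; subst i'.
    have hn0 : ut i != 0 by apply/eqP => e; rewrite e /= in h.
    have := hDpos i hn0; case: (sgzP (ut i)) => //=; rewrite ?eqxx // in hn0.
  - by rewrite abszN.
have hs : forall i, \sum_(t in A) v t i = 0.
  move=> i; rewrite big_sumType big_sumType /=.
  have e1 : \sum_(j | inl (inl j) \in A) v (inl (inl j)) i = tI i.
    by apply: eq_bigl => j; rewrite /A in_set.
  have e2 : \sum_(p | inl (inr p) \in A) v (inl (inr p)) i = - ut i.
    rewrite (eq_bigl (fun p : 'I_m * 'I_L => xpredT p.1 && (p.2 < `|ut p.1|)%N));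
      last by move=> p; rewrite /A in_set.
    rewrite -(pair_big_dep xpredT (fun i' (k : 'I_L) => (k < `|ut i'|)%N)
      (fun i' k => v (inl (inr (i', k))) i)) /=.
    rewrite (bigD1 i) //= [X in _ + X]big1 ?addr0; last first.
      by move=> i' hi'; apply: big1 => k _; rewrite (negbTE hi').
    rewrite eqxx.
    rewrite (eq_bigl (fun k : 'I_L => k \in [set k : 'I_L | (k < `|ut i|)%N]));
      last by move=> k; rewrite inE.
    rewrite sumr_const card_ltord; last exact: ltnW.
    by rewrite -mulr_natr natz mulNr -intEsg.
  have e3 : \sum_(l | inr l \in A) v (inr l) i = - q i.
    rewrite (eq_bigl xpredT); last by move=> l; rewrite /A in_set.
    by rewrite sumrN hpiece.
  rewrite e1 e2 e3 /q; lia.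
have hc : (#|Q|.+1 * (2 * m * D + 1) ^ m < #|A|.+1)%N.
  have hX : (m.+1 * X <= 2 * m * X + 1)%N.
    rewrite /X; case: (m) => [|m']; first by rewrite expn0.
    have : (0 < (2 * m'.+1 * D + 1) ^ m'.+1)%N by rewrite expn_gt0 addn1.
    nia.
  rewrite cQ -/X; lia.
have [B [BA BQ Bn0 Bs]] := core hv hs hc.
have noQ : forall l, (inr l \in B) = false.
  move=> l; apply/negbTE/negP => h.
  have : inr l \in B :&: Q by rewrite inE h inE.
  by rewrite (disjoint_setI0 BQ) inE.
pose BI := [set j | inl (inl j) \in B].
have BII : forall j, j \in BI -> j \in I.
  move=> j; rewrite inE => /(subsetP BA); by rewrite /A in_set.
pose cnt i := #|[set k : 'I_L | inl (inr (i, k)) \in B]|.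
have hcnt : forall i, (cnt i <= `|ut i|)%N.
  move=> i; rewrite -(card_ltord (ltnW (hL i))); apply: subset_leq_card.
  apply/subsetP => k; rewrite !inE => /(subsetP BA); by rewrite /A in_set.
have hBs : forall i, \sum_(j in BI) W i j * sj j = sgz (ut i) * (cnt i)%:Z.
  move=> i; have := Bs i; rewrite big_sumType big_sumType /=.
  have e1 : \sum_(j | inl (inl j) \in B) v (inl (inl j)) i = \sum_(j in BI) W i j * sj j.
    by apply: eq_bigl => j; rewrite inE.
  have e2 : \sum_(p | inl (inr p) \in B) v (inl (inr p)) i = - (sgz (ut i) * (cnt i)%:Z).
    rewrite (eq_bigl (fun p : 'I_m * 'I_L => xpredT p.1 && (inl (inr (p.1, p.2)) \in B)));
      last by move=> [a b].
    rewrite -(pair_big_dep xpredT (fun i' (k : 'I_L) => inl (inr (i', k)) \in B)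
      (fun i' k => v (inl (inr (i', k))) i)) /=.
    rewrite (bigD1 i) //= [X in _ + X]big1 ?addr0; last first.
      by move=> i' hi'; apply: big1 => k _; rewrite (negbTE hi').
    rewrite eqxx.
    rewrite (eq_bigl (fun k : 'I_L => k \in [set k : 'I_L | inl (inr (i, k)) \in B]));
      last by move=> k; rewrite inE.
    by rewrite sumr_const -mulr_natr natz mulNr.
  have e3 : \sum_(l | inr l \in B) v (inr l) i = 0.
    by rewrite big_pred0 // => l; rewrite noQ.
  rewrite e1 e2 e3 addr0 => /eqP; rewrite subr_eq0 => /eqP.
  done.
pose c i : int := sgz (ut i) * (cnt i)%:Z.
have hcu : forall i, (0 <= ((c i)%:~R : R) <= u i) \/ (u i <= ((c i)%:~R : R) <= 0).
  move=> i; have [h1 _] := hut i; have h2 := hcnt i; rewrite /c.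
  case: (ltrgtP (ut i) 0) => h.
  - rewrite ltr0_sgz // mulN1r intrN.
    have h3 : ((cnt i)%:R : R) <= - (ut i)%:~R.
      by rewrite -intrN -[X in X <= _]/(((cnt i)%:Z)%:~R) ler_int -(ltr0_norm h) -abszE lez_nat.
    have h4 : ((ut i)%:~R : R) < 0 by rewrite ltrz0.
    have h5 : (0 : R) <= (cnt i)%:R by [].
    right; case: h1 => /andP [h6 h7]; apply/andP; split; lra.
  - rewrite gtr0_sgz // mul1r.
    have h3 : ((cnt i)%:R : R) <= (ut i)%:~R.
      by rewrite -[X in X <= _]/(((cnt i)%:Z)%:~R) ler_int -(gtr0_norm h) -abszE lez_nat.
    have h4 : (0 : R) < (ut i)%:~R by rewrite ltr0z.
    have h5 : (0 : R) <= (cnt i)%:R by [].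
    left; case: h1 => /andP [h6 h7]; apply/andP; split; rewrite -?[((cnt i)%:Z)%:~R]/((cnt i)%:R); lra.
  - rewrite h sgz0 mul0r.
    case: h1 => /andP [h6 h7]; [left|right]; rewrite h in h6 h7; apply/andP; split => //.
have BIn : (0 < #|BI|)%N.
  rewrite card_gt0; apply/negP => /eqP e.
  have cnt0 : forall i, cnt i = 0%N.
    move=> i; have := hBs i; rewrite e big_set0 => /esym /eqP.
    rewrite mulf_eq0 sgz_eq0 => /orP [/eqP hu0|]; last by move/eqP => [].
    by have := hcnt i; rewrite hu0 /=; lia.
  move/negP: Bn0; apply; apply/eqP/setP => x; rewrite inE.
  case: x => [[j|[i k]]|l]; apply/negbTE/negP => hx.
  - have : j \in BI by rewrite inE.
    by rewrite e inE.
  - have := cnt0 i; rewrite /cnt => /eqP; rewrite cards_eq0 => /eqP e'.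
    have : k \in [set k : 'I_L | inl (inr (i, k)) \in B] by rewrite inE.
    by rewrite e' inE.
  - by rewrite noQ in hx.
pose x' j := if j \in BI then zs j else xs j.
pose z' j := if j \in BI then xs j else zs j.
have hx'box : in_box x'.
  move=> j; rewrite /x'; case: ifP => _; last exact: hxbox.
  by case: (zbin j) => ->; rewrite ?lexx ?ler01.
have hz'bin : is_binary z'.
  move=> j; rewrite /z'; case: ifP => h; last exact: zbin.
  by apply: xb; have := BII j h; rewrite inE => /andP [].
have cE : forall i, ((c i)%:~R : R) = \sum_(j in BI) (W i j)%:~R * (zs j - xs j).
  move=> i; rewrite /c -hBs rmorph_sum /=; apply: eq_bigr => j hj.
  by rewrite intrM dI //; exact: BII.
have mx' : forall i, matvec W x' i = matvec W xs i + (c i)%:~R.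
  move=> i; rewrite cE /matvec.
  rewrite (eq_bigr (fun j => (W i j)%:~R * xs j +
     (if j \in BI then (W i j)%:~R * (zs j - xs j) else 0))); last first.
    by move=> j _; rewrite /x'; case: ifP => _; rewrite ?addr0 //; ring.
  by rewrite big_split /= -big_mkcond.
have mz' : forall i, matvec W z' i = matvec W xs i + u i - (c i)%:~R.
  move=> i; have -> : matvec W xs i + u i = matvec W zs i by rewrite /u addrC subrK.
  rewrite cE /matvec.
  rewrite (eq_bigr (fun j => (W i j)%:~R * zs j -
     (if j \in BI then (W i j)%:~R * (zs j - xs j) else 0))); last first.
    by move=> j _; rewrite /z'; case: ifP => _; rewrite ?subr0 //; ring.
  by rewrite sumrB -big_mkcond.
have hsum : sepf g W x' + sepf g W z' <= sepf g W xs + sepf g W zs.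
  rewrite /sepf -!big_split /=; apply: ler_sum => i _.
  rewrite mx' mz' (_ : matvec W zs i = matvec W xs i + u i); last by rewrite /u addrC subrK.
  exact: conv_pair (hg i) (hcu i).
have h1 := hxmin x' hx'box.
have h2 : l1dist xs zs <= l1dist xs z'.
  by apply: zclose => //; lra.
have h3 : l1dist xs zs = l1dist xs z' + #|BI|%:R.
  rewrite /l1dist -sum_ind -big_split /=; apply: eq_bigr => j _.
  rewrite /z'; case: ifP => h /=.
    by rewrite subrr normr0 add0r distrC dI ?sj1 //; exact: BII.
  by rewrite addr0.
have : (1 : R) <= #|BI|%:R by rewrite ler1n.
lra.
Qed.
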